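(* For every word $\omega\in[n]^*$, $B_\omega=\mathrm{Comp}_0(X_\omega)$, where \[X_\omega=\bigcap_{i=1}^n\{x\in\mathbb{Z}^n: 0\le e_i^T M_\omega x\le e_i^T u_\omega\}.\]
   Context: Let $[n]=\{1,\dots,n\}$, $e_1,\dots,e_n$ the standard basis of $\mathbb{Z}^n$; $\varepsilon$ is the empty word, $*$ concatenation. For words $\omega$ over $[n]$ define recursively $\delta^i_\omega\in\mathbb{Z}^n$: $\delta^i_\varepsilon=e_i$; $\delta^j_{\omega*j}=\delta^j_\omega$, $\delta^i_{\omega*j}=\delta^i_\omega-\delta^j_\omega$ for $i\ne j$. Let $B_\varepsilon=\{0\}$, $B_{\omega*j}=B_\omega+\{0,\delta^j_\omega\}$ (Minkowski sum). Let $M_\omega=(\delta^1_\omega\ \cdots\ \delta^n_\omega)^{-1}$ (inverse of the matrix with columns $\delta^i_\omega$). For $k\in[n]$ let $D^k=\mathrm{id}+e_k(\mathbb{1}-e_k)^T$ with $\mathbb{1}=(1,\dots,1)^T$. Define $u_\varepsilon=0$, $u_{\omega*j}=e_j+D^j u_\omega$. A subset of $\mathbb{Z}^n$ is regarded as a graph by joining two elements iff their Euclidean distance is $1$; for $X\subseteq\mathbb{Z}^n$, $\mathrm{Comp}_0(X)$ denotes the connected component of $X$ containing $0$. *)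

(* Defs.v *)
(* Vectors of Z^n are column vectors 'cV[int]_n; indices [n] are 'I_n;
   words over [n] are seq 'I_n, with omega*j = rcons omega j. *)
From HB Require Import structures.
From mathcomp Require Import all_boot all_order all_algebra.
Set Implicit Arguments. Unset Strict Implicit. Unset Printing Implicit Defensive.
Import Order.TTheory GRing.Theory Num.Theory.
Local Open Scope ring_scope.

Definition evec n (i : 'I_n) : 'cV[int]_n := delta_mx i 0.

Definition delta_step n (d : 'I_n -> 'cV[int]_n) (j : 'I_n) : 'I_n -> 'cV[int]_n :=
  fun i => if i == j then d j else d i - d j.

Definition delta n (w : seq 'I_n) : 'I_n -> 'cV[int]_n :=
  foldl (@delta_step n) (@evec n) w.

(* B_w as a subset of Z^n (predicate), B_eps = {0}, B_{w*j} = B_w + {0, delta^j_w} *)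
Fixpoint Bset_rev n (r : seq 'I_n) : 'cV[int]_n -> Prop :=
  match r with
  | [::] => fun x => x = 0
  | j :: r' => fun x => Bset_rev r' x \/ Bset_rev r' (x - delta (rev r') j)
  end.
Definition Bset n (w : seq 'I_n) : 'cV[int]_n -> Prop := Bset_rev (rev w).

Definition Delta_mx n (w : seq 'I_n) : 'M[int]_n := \matrix_(i, k) delta w k i 0.
Definition M_mx n (w : seq 'I_n) : 'M[rat]_n := invmx (map_mx intr (Delta_mx w)).

Definition D_mx n (k : 'I_n) : 'M[int]_n :=
  1%:M + evec k *m (const_mx 1 - evec k)^T.

Definition u_step n (u : 'cV[int]_n) (j : 'I_n) : 'cV[int]_n := evec j + D_mx j *m u.
Definition uvec n (w : seq 'I_n) : 'cV[int]_n := foldl (@u_step n) 0 w.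

Definition Xset n (w : seq 'I_n) (x : 'cV[int]_n) : Prop :=
  forall i : 'I_n,
    0 <= (M_mx w *m map_mx intr x) i 0 /\ (M_mx w *m map_mx intr x) i 0 <= ((uvec w i 0)%:~R : rat).

(* two points of Z^n are adjacent iff their Euclidean distance is 1,
   i.e. the squared distance is 1 *)
Definition adj n (x y : 'cV[int]_n) : Prop := \sum_i (x i 0 - y i 0) ^+ 2 = 1.

(* vertices of X reachable from 0 inside X: the component of 0 (empty if 0 notin X) *)
Inductive Comp0 n (X : 'cV[int]_n -> Prop) : 'cV[int]_n -> Prop :=
  | Comp0_base : X 0 -> Comp0 X 0
  | Comp0_step x y : Comp0 X x -> X y -> adj x y -> Comp0 X y.

(* Main.v *)
Set Warnings "-notation-overridden,-ambiguous-paths,-notation-incompatible-prefix".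
Require Import Defs.
From mathcomp Require Import all_boot all_order all_algebra zify ring lra.
Set Implicit Arguments. Unset Strict Implicit. Unset Printing Implicit Defensive.
Import Order.TTheory GRing.Theory Num.Theory.
Local Open Scope ring_scope.

Section Basic.
Variable n : nat.
Implicit Types (x y z : 'cV[int]_n) (j k : 'I_n).

Lemma evecE k i l : evec k i l = (i == k)%:R.
Proof. by rewrite /evec mxE (ord1 l) eqxx andbT. Qed.

Lemma DmxE j x i : (D_mx j *m x) i 0 = if i == j then \sum_l x l 0 else x i 0.
Proof.
rewrite /D_mx mulmxDl mul1mx -mulmxA mxE [X in _ + X]mxE.
rewrite (bigD1 0) //= big1 ?addr0; last first.
  by move=> l; rewrite (ord1 l) eqxx.
rewrite evecE mxE.
have -> : \sum_l (const_mx 1 - evec j)^T 0 l * x l 0 = \sum_l x l 0 - x j 0.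
  rewrite (bigD1 j) //= !mxE !eqxx /= subrr mul0r add0r.
  rewrite [X in _ = X - _](bigD1 j) //= addrC addrK.
  by apply: eq_bigr => l Hl; rewrite !mxE (negbTE Hl) subr0 mul1r.
case: eqP => [->|_]; last by rewrite mul0r addr0.
by rewrite mul1r addrC subrK.
Qed.

Lemma Dmx_ge0 j i k : 0 <= D_mx j i k.
Proof.
rewrite /D_mx !mxE (bigD1 0) //= big1 ?addr0; last first.
  by move=> l; rewrite (ord1 l) eqxx.
rewrite !mxE /= !andbT.
by case: (i == k); case: (i == j); case: (k == j).
Qed.

Lemma Dinj j x y : D_mx j *m x = D_mx j *m y -> x = y.
Proof.
move=> H.
have Hi : forall i, i != j -> x i 0 = y i 0.
  move=> i Hij; have := congr1 (fun M : 'cV[int]_n => M i 0) H.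
  by rewrite !DmxE (negbTE Hij).
apply/matrixP => i l; rewrite (ord1 l).
case: (eqVneq i j) => [->|Hij]; last exact: Hi.
have := congr1 (fun M : 'cV[int]_n => M j 0) H; rewrite !DmxE eqxx.
rewrite (bigD1 j) //= [X in _ = X](bigD1 j) //=.
rewrite (eq_bigr (fun l => y l 0)); first by move/addIr.
by move=> l0 Hl; apply: Hi.
Qed.

Lemma sum_evec k : \sum_l0 evec k l0 0 = 1.
Proof.
rewrite (bigD1 k) //= evecE eqxx big1 ?addr0 //.
by move=> l0 Hl; rewrite evecE (negbTE Hl).
Qed.

Lemma Dev j k : D_mx j *m evec k = if k == j then evec j else evec k + evec j.
Proof.
apply/matrixP => i l; rewrite (ord1 l) DmxE sum_evec.
case: (eqVneq i j) => [->|Hij].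
  case: (eqVneq k j) => [Ekj|Hkj]; first by subst k; rewrite evecE eqxx.
  by rewrite !mxE /= !andbT eqxx (eq_sym j k) (negbTE Hkj) add0r.
case: (eqVneq k j) => [Ekj|Hkj]; first by subst k.
by rewrite !mxE /= !andbT (negbTE Hij) addr0.
Qed.

End Basic.

Section Words.
Variable n : nat.
Implicit Types (x y z : 'cV[int]_n) (j k : 'I_n) (w : seq 'I_n).

Definition Mi w : 'M[int]_n := foldr (fun j M => M *m D_mx j) 1%:M w.

Lemma Mi_ge0 w i k : 0 <= Mi w i k.
Proof.
elim: w i k => [|j w IH] i k /=; first by rewrite mxE; case: (i == k).
rewrite mxE; apply: sumr_ge0 => l _; apply: mulr_ge0; [exact: IH | exact: Dmx_ge0].
Qed.

Lemma delta_lin (A : 'M[int]_n) w : forall d1 d2, (forall i, d1 i = A *m d2 i) ->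
  forall i, foldl (@delta_step n) d1 w i = A *m foldl (@delta_step n) d2 w i.
Proof.
elim: w => [|j w IH] d1 d2 H i /=; first exact: H.
apply: IH => i0; rewrite /delta_step; case: (i0 == j); first exact: H.
by rewrite !H mulmxBr.
Qed.

Lemma delta_cons j w k : D_mx j *m delta (j :: w) k = delta w k.
Proof.
rewrite /delta /=; symmetry; apply: delta_lin => i.
rewrite /delta_step; case: (eqVneq i j) => [->|Hij]; first by rewrite Dev eqxx.
by rewrite mulmxBr !Dev eqxx (negbTE Hij) addrK.
Qed.

Lemma Delta_cons j w : D_mx j *m Delta_mx (j :: w) = Delta_mx w.
Proof.
apply/matrixP => i k.
transitivity ((D_mx j *m delta (j :: w) k) i 0); last by rewrite delta_cons mxE.
rewrite [LHS]mxE [RHS]mxE; apply: eq_bigr => l _; by rewrite [Delta_mx _ _ _]mxE.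
Qed.

Lemma Mi_Delta w : Mi w *m Delta_mx w = 1%:M.
Proof.
elim: w => [|j w IH] /=.
  rewrite mul1mx; apply/matrixP => i k; rewrite !mxE /=.
  by rewrite andbT.
rewrite -(mulmxA (Mi w)) Delta_cons; exact: IH.
Qed.

Lemma M_mxE w : M_mx w = map_mx intr (Mi w).
Proof.
have H : map_mx intr (Mi w) *m map_mx intr (Delta_mx w) = 1%:M :> 'M[rat]_n.
  by rewrite -map_mxM Mi_Delta map_mx1.
have [U1 U2] := mulmx1_unit H.
rewrite /M_mx -[RHS]mulmx1 -(mulmxV U2) mulmxA H mul1mx //.
Qed.

Lemma foldl_u w : forall v, foldl (@u_step n) v w = uvec w + Mi w *m v.
Proof.
elim: w => [|j w IH] v /=; first by rewrite /uvec /= add0r mul1mx.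
rewrite /uvec /= !IH /u_step mulmx0 addr0 mulmxDr -addrA -mulmxA //.
Qed.

Lemma uvec_cons j w : uvec (j :: w) = uvec w + Mi w *m evec j.
Proof. by rewrite {1}/uvec /= foldl_u /u_step mulmx0 addr0. Qed.

Lemma Bset_rev_rcons r j x :
  Bset_rev (rcons r j) x <-> Bset_rev r (D_mx j *m x) \/ Bset_rev r (D_mx j *m x - evec j).
Proof.
elim: r x => [|k r IH] x /=.
  have E1 : forall v : 'cV[int]_n, (D_mx j *m v = 0) <-> v = 0.
    move=> v; split => [H|->]; last by rewrite mulmx0.
    by apply: (@Dinj _ j); rewrite H mulmx0.
  have E2 : D_mx j *m x - evec j = D_mx j *m (x - evec j) by rewrite mulmxBr Dev eqxx.
  by rewrite /delta /= E2 !E1.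
rewrite !IH rev_rcons mulmxBr delta_cons.
have -> : D_mx j *m x - delta (rev r) k - evec j = D_mx j *m x - evec j - delta (rev r) k.
  by rewrite addrAC.
tauto.
Qed.

Lemma Bset_cons j w x :
  Bset (j :: w) x <-> Bset w (D_mx j *m x) \/ Bset w (D_mx j *m x - evec j).
Proof. by rewrite /Bset rev_cons Bset_rev_rcons. Qed.

Lemma Bset0 w : Bset w 0.
Proof. rewrite /Bset; elim: (rev w) => [|k r IH] /=; by [left|]. Qed.

Definition Xi w x := forall i, 0 <= (Mi w *m x) i 0 /\ (Mi w *m x) i 0 <= uvec w i 0.

Lemma XsetE w x : Xset w x <-> Xi w x.
Proof.
rewrite /Xset /Xi M_mxE -map_mxM.
by split => H i; have := H i; rewrite !mxE ler0z ler_int.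
Qed.

End Words.

Section Adj.
Variable n : nat.
Implicit Types (x y z : 'cV[int]_n) (j k : 'I_n).

Lemma addE x y i l : (x + y) i l = x i l + y i l. Proof. by rewrite mxE. Qed.
Lemma oppE x i l : (- x) i l = - x i l. Proof. by rewrite !mxE. Qed.
Lemma subE x y i l : (x - y) i l = x i l - y i l. Proof. by rewrite !mxE. Qed.

Lemma adj_sym x y : adj x y -> adj y x.
Proof.
rewrite /adj => <-; apply: eq_bigr => i _.
by rewrite -sqrrN opprB.
Qed.

Lemma adjD x k : adj x (x + evec k).
Proof.
rewrite /adj -(sum_evec k); apply: eq_bigr => i _.
rewrite addE evecE; case: (i == k); rewrite /= ?addr0; lia.
Qed.

Lemma adjB x k : adj x (x - evec k).
Proof.
rewrite /adj -(sum_evec k); apply: eq_bigr => i _.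
rewrite subE evecE; case: (i == k); rewrite /= ?subr0; lia.
Qed.

Lemma adjP x y : adj x y -> exists k, y = x + evec k \/ y = x - evec k.
Proof.
rewrite /adj => H.
have [/existsP [k Hk]|Hno] := boolP [exists k, x k 0 != y k 0]; last first.
  exfalso; move: H; rewrite big1 //= => i _.
  have := Hno; rewrite negb_exists => /forallP /(_ i); rewrite negbK => /eqP ->.
  by rewrite subrr expr0n.
move: H; rewrite (bigD1 k) //= => H.
have Hsq : forall t : int, 0 <= t ^+ 2 by move=> t; rewrite sqr_ge0.
have Hk1 : 1 <= (x k 0 - y k 0) ^+ 2.
  move: Hk; rewrite -subr_eq0 expr2; move: (x k 0 - y k 0) => t Ht; nia.
have Hrest : \sum_(i < n | i != k) (x i 0 - y i 0) ^+ 2 = 0.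
  have : 0 <= \sum_(i < n | i != k) (x i 0 - y i 0) ^+ 2 by apply: sumr_ge0.
  move: H Hk1; move: (\sum_(i < n | i != k) _) => s; lia.
have Hoth : forall i, i != k -> x i 0 = y i 0.
  move=> i Hi; have := psumr_eq0P (fun i _ => Hsq (x i 0 - y i 0)) Hrest Hi.
  by move/eqP; rewrite sqrf_eq0 subr_eq0 => /eqP.
have Hkk : (x k 0 - y k 0) ^+ 2 = 1 by move: H; rewrite Hrest addr0.
exists k; move: Hkk; rewrite expr2; move: {-1}(x k 0 - y k 0) (erefl (x k 0 - y k 0)) => t Et Ht.
have [Ht1|Ht1] : t = 1 \/ t = -1 by nia.
  right; apply/matrixP => i l; rewrite (ord1 l) subE evecE.
  case: (eqVneq i k) => [->|Hi]; first by move: Et; rewrite Ht1; lia.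
  by rewrite subr0 Hoth.
left; apply/matrixP => i l; rewrite (ord1 l) addE evecE.
case: (eqVneq i k) => [->|Hi]; first by move: Et; rewrite Ht1; lia.
by rewrite addr0 Hoth.
Qed.

Lemma Comp0_X (X : 'cV[int]_n -> Prop) x : Comp0 X x -> X x.
Proof. by case. Qed.

Lemma Comp0_ext (X Y : 'cV[int]_n -> Prop) : (forall x, X x <-> Y x) ->
  forall x, Comp0 X x -> Comp0 Y x.
Proof.
move=> H x; elim => [H0|x0 y C IH Xy A]; first by apply: Comp0_base; apply/H.
by apply: Comp0_step IH _ A; apply/H.
Qed.

End Adj.

Section Step.
Variable n : nat.
Variables (M : 'M[int]_n) (u : 'cV[int]_n) (j : 'I_n) (B : 'cV[int]_n -> Prop).
Hypothesis HM : forall i k, 0 <= M i k.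
Definition XX (z : 'cV[int]_n) := forall i, 0 <= (M *m z) i 0 /\ (M *m z) i 0 <= u i 0.
Definition Xg (z : 'cV[int]_n) :=
  forall i, 0 <= (M *m z) i 0 /\ (M *m z) i 0 <= (u + M *m evec j) i 0.
Definition X' (x : 'cV[int]_n) := Xg (D_mx j *m x).
Hypothesis HB : forall z, B z <-> Comp0 XX z.
Hypothesis HB0 : B 0.

Lemma MeE k i : (M *m evec k) i 0 = M i k.
Proof.
rewrite mxE (bigD1 k) //= evecE eqxx mulr1 big1 ?addr0 //.
by move=> l Hl; rewrite evecE (negbTE Hl) mulr0.
Qed.

Ltac coord := rewrite ?mulmxBr ?mulmxDr ?mulmxN ?subE ?addE ?oppE ?MeE.
Ltac veq := apply/matrixP => ? ?; rewrite ?subE ?addE ?oppE; ring.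

Lemma XB b : B b -> XX b.
Proof. by move/HB/Comp0_X. Qed.

Lemma ClD b k : B b -> XX (b + evec k) -> B (b + evec k).
Proof. by move=> /HB Hb Xb; apply/HB; apply: Comp0_step Hb Xb (adjD _ _). Qed.
Lemma ClB b k : B b -> XX (b - evec k) -> B (b - evec k).
Proof. by move=> /HB Hb Xb; apply/HB; apply: Comp0_step Hb Xb (adjB _ _). Qed.

Lemma XgX z : XX z -> Xg z /\ Xg (z + evec j).
Proof.
move=> H; split => i; have := H i; have := HM i j; coord; lra.
Qed.

Lemma back x : Comp0 X' x -> B (D_mx j *m x) \/ B (D_mx j *m x - evec j).
Proof.
elim => [H0|x0 y C IH Xy A]; first by left; rewrite mulmx0.
have [k [Ey|Ey]] := adjP A; subst y; rewrite /X' in Xy.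
- rewrite mulmxDr Dev in Xy *.
  case: (eqVneq k j) Xy => [Ekj|Hkj] Xy.
  + subst k.
    case: IH => [Hb|Hb].
      by right; rewrite addrK.
    move: Hb; move Eb: (D_mx j *m x0 - evec j) => b Hb.
    have Ez : D_mx j *m x0 = b + evec j by rewrite -Eb subrK.
    rewrite Ez in Xy *; right; rewrite addrK.
    apply: (ClD Hb) => i; have := Xy i; have := XB Hb i; have := HM i j; coord; lra.
  + idtac.
    case: IH => [Hb|Hb].
      right; have -> : D_mx j *m x0 + (evec k + evec j) - evec j = D_mx j *m x0 + evec k by veq.
      apply: (ClD Hb) => i; have := Xy i; have := XB Hb i; have := HM i j; have := HM i k; coord; lra.
    move: Hb; move Eb: (D_mx j *m x0 - evec j) => b Hb.
    have Ez : D_mx j *m x0 = b + evec j by rewrite -Eb subrK.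
    rewrite Ez in Xy *; right.
    have -> : b + evec j + (evec k + evec j) - evec j = b + evec k + evec j by veq.
    have Hb1 : B (b + evec k).
      apply: (ClD Hb) => i; have := Xy i; have := XB Hb i; have := HM i j; have := HM i k; coord; lra.
    apply: (ClD Hb1) => i; have := Xy i; have := XB Hb i; have := HM i j; have := HM i k; coord; lra.
- rewrite mulmxBr Dev in Xy *.
  case: (eqVneq k j) Xy => [Ekj|Hkj] Xy.
  + subst k.
    case: IH => [Hb|Hb].
      left; apply: (ClB Hb) => i; have := Xy i; have := XB Hb i; have := HM i j; coord; lra.
    by left.
  + idtac.
    case: IH => [Hb|Hb].
      left; have -> : D_mx j *m x0 - (evec k + evec j) = D_mx j *m x0 - evec k - evec j by veq.
      have Hb1 : B (D_mx j *m x0 - evec k).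
        apply: (ClB Hb) => i; have := Xy i; have := XB Hb i; have := HM i j; have := HM i k; coord; lra.
      apply: (ClB Hb1) => i; have := Xy i; have := XB Hb i; have := HM i j; have := HM i k; coord; lra.
    move: Hb; move Eb: (D_mx j *m x0 - evec j) => b Hb.
    have Ez : D_mx j *m x0 = b + evec j by rewrite -Eb subrK.
    rewrite Ez in Xy *; left.
    have -> : b + evec j - (evec k + evec j) = b - evec k by veq.
    apply: (ClB Hb) => i; have := Xy i; have := XB Hb i; have := HM i j; have := HM i k; coord; lra.
Qed.

Lemma lift2 z : Comp0 XX z -> (forall x, D_mx j *m x = z -> Comp0 X' x) ->
  forall x, D_mx j *m x = z + evec j -> Comp0 X' x.
Proof.
move=> Cz H x Ex.
have Ex' : D_mx j *m (x - evec j) = z by rewrite mulmxBr Dev eqxx Ex addrK.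
apply: (Comp0_step (H _ Ex')); last exact: adj_sym (adjB _ _).
by rewrite /X' Ex; exact: (XgX (Comp0_X Cz)).2.
Qed.

Lemma fwd1 z : Comp0 XX z -> forall x, D_mx j *m x = z -> Comp0 X' x.
Proof.
elim => [X0|z0 z' Cz IH Xz' A] x Ex.
  have x0 : x = 0 by apply: (@Dinj _ j); rewrite Ex mulmx0.
  subst x; apply: Comp0_base; rewrite /X' mulmx0; exact: (XgX X0).1.
have IH2 := lift2 Cz IH.
have Xx : X' x by rewrite /X' Ex; exact: (XgX Xz').1.
have [k [Ez|Ez]] := adjP A; rewrite {}Ez in Ex Xz' Xx A.
- case: (eqVneq k j) => [Ekj|Hkj].
    by subst k; apply: IH2.
  have Dp : D_mx j *m (x + evec j - evec k) = z0.
    rewrite mulmxBr mulmxDr !Dev eqxx (negbTE Hkj) Ex; veq.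
  have Cp := IH _ Dp.
  have Xq : X' (x + evec j) by rewrite /X' mulmxDr Dev eqxx Ex; exact: (XgX Xz').2.
  have Apq : adj (x + evec j - evec k) (x + evec j).
    by have := adjD (x + evec j - evec k) k; rewrite subrK.
  have Cq := Comp0_step Cp Xq Apq.
  exact: Comp0_step Cq Xx (adj_sym (adjD _ _)).
- case: (eqVneq k j) => [Ekj|Hkj].
    subst k.
    have Dq : D_mx j *m (x + evec j) = z0 by rewrite mulmxDr Dev eqxx Ex subrK.
    exact: Comp0_step (IH _ Dq) Xx (adj_sym (adjD _ _)).
  have Dq : D_mx j *m (x + evec k) = z0 + evec j.
    rewrite mulmxDr Dev (negbTE Hkj) Ex; veq.
  exact: Comp0_step (IH2 _ Dq) Xx (adj_sym (adjD _ _)).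
Qed.

Lemma step_iff x : (B (D_mx j *m x) \/ B (D_mx j *m x - evec j)) <-> Comp0 X' x.
Proof.
split; last exact: back.
case => /HB Cz; first exact: fwd1 Cz _ erefl.
by apply: (lift2 Cz (fwd1 Cz)); rewrite subrK.
Qed.

End Step.

Lemma main n (w : seq 'I_n) : forall x, Bset w x <-> Comp0 (Xi w) x.
Proof.
elim: w => [|j w IH] x.
  have X0 : forall y : 'cV[int]_n, Xi [::] y <-> y = 0.
    move=> y; rewrite /Xi /= mul1mx /uvec /=; split => [H|->] .
      apply/matrixP => i l; rewrite (ord1 l); have := H i; rewrite !mxE; lra.
    by move=> i; rewrite !mxE.
  rewrite /Bset /=; split => [->|H].
    by apply: Comp0_base; apply/X0.
  by apply/X0; exact: Comp0_X H.
rewrite Bset_cons.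
have HB : forall z, Bset w z <-> Comp0 (XX (Mi w) (uvec w)) z by exact: IH.
rewrite (step_iff j (@Mi_ge0 n w) HB (Bset0 w)).
split; apply: Comp0_ext => y; rewrite /X' /Xg /Xi /= uvec_cons mulmxA; by [].
Qed.

Theorem corollary3p6 (n : nat) (w : seq 'I_n) (x : 'cV[int]_n) :
  Bset w x <-> Comp0 (Xset w) x.
Proof.
rewrite main; split; apply: Comp0_ext => y; rewrite XsetE; by [].
Qed.
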